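(* Consider the following game among $N \ge 2$ domains $i = 1,\dots,N$. Domain $i$ chooses quality $q_i \in [0,1]$ and generality $g_i \in [0,1]$ and receives payoff \[ \pi_i = \alpha_i q_i (1 + \beta g_i) + \lambda \sum_{j \neq i} q_j g_j - \Big(\tfrac{\gamma_q}{2} q_i^2 + \tfrac{\gamma_g}{2} g_i^2 q_i + \kappa g_i\Big), \] with parameters $\alpha_i > 0$, $\beta \ge 0$, $\lambda > 0$, $\gamma_q, \gamma_g > 0$, $\kappa \ge 0$. Fix quality levels $q_i > 0$. Let $g_i^{NE}$ be the Nash equilibrium generality of domain $i$ (the maximizer of $\pi_i$ over $g_i$, taking the other domains' choices as given) and let $g_i^{SO}$ be the socially optimal generality (the maximizer over $g_i$ of total domain welfare $\sum_{k=1}^N \pi_k$, abstracting from any consumer utility term), and suppose both are interior solutions characterized by their first-order conditions. Then $g_i^{NE} < g_i^{SO}$, and the generality gap is \[ \Delta g_i = g_i^{SO} - g_i^{NE} = \frac{(N-1)\lambda}{\gamma_g}, \] which is increasing in $N$ and $\lambda$ and decreasing in $\gamma_g$.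
   Context: The model describes an organization with $N$ domain teams producing data products; $q_i$ is the quality and $g_i$ the cross-domain generality (reusability) of domain $i$'s product. The payoff consists of own-analytics benefit $\alpha_i q_i(1+\beta g_i)$, cross-domain benefit $\lambda\sum_{j\ne i} q_j g_j$ from other domains' products, and cost $C_i(q_i,g_i) = \frac{\gamma_q}{2}q_i^2 + \frac{\gamma_g}{2}g_i^2 q_i + \kappa g_i$. *)

(* Defs.v *)
From mathcomp Require Import all_boot all_order all_algebra.
Set Implicit Arguments. Unset Strict Implicit. Unset Printing Implicit Defensive.
Import Order.TTheory GRing.Theory Num.Theory.
Local Open Scope ring_scope.

Section DataGame.
Variables (R : realFieldType) (N : nat).

Definition payoff (alpha : 'I_N -> R) (beta lambda gq gg kappa : R)
    (q g : 'I_N -> R) (i : 'I_N) : R :=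
  alpha i * q i * (1 + beta * g i)
  + lambda * (\sum_(j < N | j != i) q j * g j)
  - (gq / 2 * q i ^+ 2 + gg / 2 * g i ^+ 2 * q i + kappa * g i).

Definition welfare (alpha : 'I_N -> R) (beta lambda gq gg kappa : R)
    (q g : 'I_N -> R) : R :=
  \sum_(k < N) payoff alpha beta lambda gq gg kappa q g k.

Definition upd (g : 'I_N -> R) (i : 'I_N) (x : R) : 'I_N -> R :=
  fun j => if j == i then x else g j.

Definition gen_gap (n : nat) (lambda gg : R) : R := (n%:R - 1) * lambda / gg.

End DataGame.

(* Main.v *)
Require Import Defs.
From mathcomp Require Import all_boot all_order all_algebra.
From mathcomp Require Import ring lra.
Import Order.TTheory GRing.Theory Num.Theory.
Local Open Scope ring_scope.

Lemma quad_opt (R : realFieldType) (C a b x0 : R) : 0 < b -> 0 < x0 < 1 ->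
  (forall x, 0 <= x <= 1 -> C + a*x - b*x^+2 <= C + a*x0 - b*x0^+2) ->
  a = 2*b*x0.
Proof.
move=> hb /andP[h0 h1] H.
set d := a - 2*b*x0.
suff: d = 0 by rewrite /d => /eqP; rewrite subr_eq0 => /eqP.
set e := x0 * (1 - x0).
have he : 0 < e by rewrite /e mulr_gt0 // subr_gt0.
have he1 : e <= x0 by rewrite /e; nra.
have he2 : e <= 1 - x0 by rewrite /e; nra.
have key : forall h, 0 <= x0 + h <= 1 -> h * d - b * h^+2 <= 0.
  move=> h hh; have := H _ hh; rewrite /d; move=> HH; nra.
case: (ltrgtP d 0) => // hd; exfalso.
- pose D := - d.
  have hD : 0 < D by rewrite /D oppr_gt0.
  have hp : 0 < D + 2*b*e by nra.
  pose t := e / (D + 2*b*e).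
  have tp : 0 < t by rewrite /t divr_gt0.
  have ht : t * D + 2 * (b * t) * e = e.
    by rewrite /t; field; rewrite gt_eqF.
  have hbt : 0 < b * t by rewrite mulr_gt0.
  have hbe : 0 < b * e by rewrite mulr_gt0.
  have htd : t * D <= e.
    have : 0 < (b * t) * e by rewrite mulr_gt0.
    lra.
  have hbt2 : 2 * (b * t) < 1.
    have : 0 < (t * D) * b by apply: mulr_gt0 => //; apply: mulr_gt0.
    have : (2 * (b * t)) * (b * e) + t * D * b = b * e.
      by rewrite -[in RHS]ht; ring.
    nra.
  have htD : 0 < t * D by exact: mulr_gt0.
  have := key (- (t*D)).
  have -> : 0 <= x0 + - (t*D) <= 1 by apply/andP; split; lra.
  move=> /(_ isT) => hk.
  have : 0 < t * D * D * (1 - b * t).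
    apply: mulr_gt0; last lra. apply: mulr_gt0 => //; exact: mulr_gt0.
  move: hk; have -> : d = - D by rewrite /D opprK.
  move=> hk. nra.
- move: hd key; set D := d => hD key.
  have hp : 0 < D + 2*b*e by nra.
  pose t := e / (D + 2*b*e).
  have tp : 0 < t by rewrite /t divr_gt0.
  have ht : t * D + 2 * (b * t) * e = e.
    by rewrite /t; field; rewrite gt_eqF.
  have hbt : 0 < b * t by rewrite mulr_gt0.
  have hbe : 0 < b * e by rewrite mulr_gt0.
  have htd : t * D <= e.
    have : 0 < (b * t) * e by rewrite mulr_gt0.
    lra.
  have hbt2 : 2 * (b * t) < 1.
    have : 0 < (t * D) * b by apply: mulr_gt0 => //; apply: mulr_gt0.
    have : (2 * (b * t)) * (b * e) + t * D * b = b * e.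
      by rewrite -[in RHS]ht; ring.
    nra.
  have htD : 0 < t * D by exact: mulr_gt0.
  have := key (t*D).
  have -> : 0 <= x0 + (t*D) <= 1 by apply/andP; split; lra.
  move=> /(_ isT) => hk.
  have : 0 < t * D * D * (1 - b * t).
    apply: mulr_gt0; last lra. apply: mulr_gt0 => //; exact: mulr_gt0.
  nra.
Qed.

Section Aux.
Variables (R : realFieldType) (N : nat) (alpha : 'I_N -> R)
    (beta lambda gq gg kappa : R) (q : 'I_N -> R).

Lemma sum_except (f : 'I_N -> R) k :
  \sum_(j < N | j != k) f j = \sum_(j < N) f j - f k.
Proof. by rewrite [in RHS](bigD1 k) //= addrC addrK. Qed.

Lemma payoff_local (h g : 'I_N -> R) i : (forall j, j != i -> h j = g j) ->
  payoff alpha beta lambda gq gg kappa q h i =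
  (alpha i * q i + lambda * \sum_(j < N | j != i) q j * g j - gq/2 * q i ^+ 2)
  + (alpha i * q i * beta - kappa) * h i - (gg/2 * q i) * (h i)^+2.
Proof.
move=> E; rewrite /payoff.
rewrite (eq_bigr (fun j => q j * g j)); last by move=> j /E ->.
ring.
Qed.

Definition F k y := alpha k*q k*(1+beta*y) - (gq/2*q k^+2 + gg/2*y^+2*q k + kappa*y)
   - lambda*q k*y.

Lemma welfare_form (h : 'I_N -> R) :
  welfare alpha beta lambda gq gg kappa q h =
  \sum_(k < N) F k (h k) + N%:R * lambda * \sum_(j < N) q j * h j.
Proof.
rewrite /welfare.
rewrite (eq_bigr (fun k => F k (h k) + lambda * \sum_(j < N) q j * h j)).
  rewrite big_split /= sumr_const card_ord -mulr_natl; ring.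
move=> k _; rewrite /payoff sum_except /F; ring.
Qed.

Lemma welfare_local (h g : 'I_N -> R) i : (forall j, j != i -> h j = g j) ->
  welfare alpha beta lambda gq gg kappa q h =
  (\sum_(k < N | k != i) F k (g k) + N%:R * lambda * \sum_(j < N | j != i) q j * g j
    + alpha i * q i - gq/2 * q i ^+ 2)
  + (alpha i * q i * beta - kappa - lambda * q i + N%:R * lambda * q i) * h i
  - (gg/2 * q i) * (h i)^+2.
Proof.
move=> E; rewrite welfare_form (bigD1 i) //= [\sum_(j < N) q j * h j](bigD1 i) //=.
rewrite (eq_bigr (fun k => F k (g k))); last by move=> j /E ->.
rewrite [\sum_(j < N | j != i) q j * h j](eq_bigr (fun j => q j * g j)); last by move=> j /E ->.
rewrite /F; ring.
Qed.

End Aux.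

Theorem proposition1 (R : realFieldType) (N : nat) (alpha : 'I_N -> R)
    (beta lambda gq gg kappa : R) (q gNE gSO : 'I_N -> R) :
  (2 <= N)%N ->
  (forall i, 0 < alpha i) -> 0 <= beta -> 0 < lambda -> 0 < gq -> 0 < gg ->
  0 <= kappa ->
  (* fixed qualities, positive and in [0,1] *)
  (forall i, 0 < q i <= 1) ->
  (* gNE: Nash equilibrium in generality (each g_i a best response over [0,1]) *)
  (forall i, 0 <= gNE i <= 1) ->
  (forall i x, 0 <= x <= 1 ->
     payoff alpha beta lambda gq gg kappa q (upd gNE i x) i
       <= payoff alpha beta lambda gq gg kappa q gNE i) ->
  (* gSO: social optimum of total domain welfare over generality profiles *)
  (forall i, 0 <= gSO i <= 1) ->
  (forall g : 'I_N -> R, (forall j, 0 <= g j <= 1) ->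
     welfare alpha beta lambda gq gg kappa q g
       <= welfare alpha beta lambda gq gg kappa q gSO) ->
  (* both are interior solutions *)
  (forall i, 0 < gNE i < 1) -> (forall i, 0 < gSO i < 1) ->
  (forall i, gNE i < gSO i /\ gSO i - gNE i = gen_gap N lambda gg)
  /\ (forall n1 n2 : nat, (n1 < n2)%N -> gen_gap n1 lambda gg < gen_gap n2 lambda gg)
  /\ (forall l1 l2 : R, l1 < l2 -> gen_gap N l1 gg < gen_gap N l2 gg)
  /\ (forall c1 c2 : R, 0 < c1 -> c1 < c2 -> gen_gap N lambda c2 < gen_gap N lambda c1).
Proof.
move=> hN ha hb hl hq hg hk hqi hNE1 NE hSO1 SO iNE iSO.
have hgap : 0 < gen_gap N lambda gg.
  rewrite /gen_gap divr_gt0 // mulr_gt0 // subr_gt0.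
  by rewrite (_ : 1 = 1%:R) // ltr_nat.
have updE : forall (g : 'I_N -> R) i x j, j != i -> upd g i x j = g j.
  by move=> g i x j /negbTE; rewrite /upd => ->.
have updi : forall (g : 'I_N -> R) i x, upd g i x i = x by move=> g i x; rewrite /upd eqxx.
have gap : forall i, gSO i - gNE i = gen_gap N lambda gg.
  move=> i.
  have qp : 0 < q i by case/andP: (hqi i).
  have e1 : alpha i * q i * beta - kappa = 2 * (gg/2 * q i) * gNE i.
    apply: (@quad_opt _ (alpha i * q i + lambda * \sum_(j < N | j != i) q j * gNE j - gq/2 * q i ^+ 2)).
    - by rewrite mulr_gt0 // divr_gt0.
    - exact: iNE.
    move=> x hx; have := NE i x hx.
    rewrite (@payoff_local _ _ alpha beta lambda gq gg kappa q _ gNE i (updE gNE i x)) updi.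
    by rewrite (@payoff_local _ _ alpha beta lambda gq gg kappa q gNE gNE i (fun _ _ => erefl)).
  have e2 : alpha i * q i * beta - kappa - lambda * q i + N%:R * lambda * q i
            = 2 * (gg/2 * q i) * gSO i.
    apply: (@quad_opt _ ((\sum_(k < N | k != i) @F _ _ alpha beta lambda gq gg kappa q k (gSO k) + N%:R * lambda * \sum_(j < N | j != i) q j * gSO j
    + alpha i * q i - gq/2 * q i ^+ 2))).
    - by rewrite mulr_gt0 // divr_gt0.
    - exact: iSO.
    move=> x hx.
    have := SO (upd gSO i x).
    have hx' : forall j, 0 <= upd gSO i x j <= 1.
      move=> j; case: (eqVneq j i) => [->|ne]; first by rewrite updi.
      by rewrite updE.
    move=> /(_ hx').
    rewrite (@welfare_local _ _ alpha beta lambda gq gg kappa q _ gSO i (updE gSO i x)) updi.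
    by rewrite (@welfare_local _ _ alpha beta lambda gq gg kappa q gSO gSO i (fun _ _ => erefl)).
  have E : gg * q i * (gSO i - gNE i) = (N%:R - 1) * lambda * q i.
    have : gg * q i * (gSO i - gNE i) = 2 * (gg/2 * q i) * gSO i - 2 * (gg/2 * q i) * gNE i.
      by field.
    rewrite -e1 -e2 => ->; ring.
  apply: (mulfI (x := gg * q i)); first by rewrite mulf_neq0 // gt_eqF.
  by rewrite E /gen_gap; field; rewrite gt_eqF.
split.
  move=> i; split; last exact: gap.
  by rewrite -subr_gt0 gap.
split.
  move=> n1 n2 hn; rewrite /gen_gap ltr_pM2r ?invr_gt0 // ltr_pM2r // ltrD2r ltr_nat.
  exact: hn.
split.
  move=> l1 l2 hl12; rewrite /gen_gap ltr_pM2r ?invr_gt0 // ltr_pM2l //.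
  by rewrite subr_gt0 (_ : 1 = 1%:R) // ltr_nat.
move=> c1 c2 hc1 hc12; rewrite /gen_gap ltr_pM2l.
  by rewrite ltf_pV2 // ?(lt_trans hc1 hc12) //; rewrite posrE (lt_trans hc1 hc12).
by rewrite mulr_gt0 // subr_gt0 (_ : 1 = 1%:R) // ltr_nat.
Qed.
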